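(* Under the Sub-Gaussian Mixture Model described in the context, there exist universal constants $C_s,C_g,C_e>0$ such that if $s^2\ge C_s k$, then \[ \max\left\{\frac{\|\mathbf F-\mathbf F^*\|_1}{\|\mathbf F^*\|_1}:\ \eta(\mathbf F)\le\eta(\mathbf F^* ),\ \mathbf F\in\mathcal F\right\}\le C_g\exp\left[-\frac{s^2}{C_e}\right] \] with probability at least $1-\frac32 n^{-1}$.
   Context: Sub-Gaussian norm: for a real random variable $X$, $\|X\|_{\psi_2}=\inf\{t>0:\mathbb E\exp(X^2/t^2)\le 2\}$; for a random vector $\mathbf x\in\mathbb R^m$, $\|\mathbf x\|_{\psi_2}=\sup_{\|\mathbf u\|_2=1}\|\langle\mathbf x,\mathbf u\rangle\|_{\psi_2}$. Model: integers $n\ge 4$, $k\ge 2$ with $k\mid n$; unknown centers $\boldsymbol\mu_1,\dots,\boldsymbol\mu_k\in\mathbb R^d$; unknown labels $\sigma^*:[n]\to[k]$ with $|\{i:\sigma^*(i)=a\}|=n/k$ for every $a$. Observations $\mathbf h_i=\boldsymbol\mu_{\sigma^*(i)}+\mathbf g_i$, $i\in[n]$, with $\mathbf g_i$ independent sub-Gaussian random vectors, $\|\mathbf g_i\|_{\psi_2}\le\tau$. $\Delta=\min_{a\ne b}\|\boldsymbol\mu_a-\boldsymbol\mu_b\|_2$, $s=\Delta/\tau$. Oracle integer program: $\mathcal F=\{\mathbf F\in\{0,1\}^{n\times k}:\mathbf F\mathbf 1_k=\mathbf 1_n\}$; $\mathbf F^*\in\mathcal F$ with $F^*_{ja}=\mathbb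 1\{\sigma^*(j)=a\}$; $\bar{\mathbf h}_i=\boldsymbol\mu_{\sigma^*(i)}+4\mathbf g_i$; $\eta(\mathbf F)=\sum_{j}\sum_{a}\|\bar{\mathbf h}_j-\boldsymbol\mu_a\|_2^2F_{ja}$. $\|\cdot\|_1$ is the entrywise $\ell_1$ norm. *)

(* Defs.v *)
From HB Require Import structures.
From mathcomp Require Import all_boot all_order all_algebra.
From mathcomp Require Import all_classical all_reals all_analysis.
Set Implicit Arguments. Unset Strict Implicit. Unset Printing Implicit Defensive.
Import Order.TTheory GRing.Theory Num.Theory.
Local Open Scope classical_set_scope.
Local Open Scope ring_scope.

Section Defs.
Context {R : realType}.

Definition l2norm (m : nat) (v : 'rV[R]_m) : R :=
  Num.sqrt (\sum_(j < m) v ord0 j ^+ 2).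

Definition dotv (m : nat) (u v : 'rV[R]_m) : R := \sum_(j < m) u ord0 j * v ord0 j.

Context {dT : measure_display} {T : measurableType dT} (P : probability T R).

(* sub-Gaussian (psi_2) norm of a real random variable, as an extended real:
   inf { t > 0 : E exp(X^2/t^2) <= 2 }  (inf of the empty set is +oo) *)
Definition psi2_norm (X : T -> R) : \bar R :=
  ereal_inf [set t%:E | t in [set t : R | 0 < t /\
      (\int[P]_w (expR (X w ^+ 2 / t ^+ 2))%:E <= 2%:E)%E]].

Definition psi2_norm_vec (m : nat) (x : T -> 'rV[R]_m) : \bar R :=
  ereal_sup [set psi2_norm (fun w => dotv (x w) u) | u in [set u | l2norm u = 1]].

Definition random_vec (m : nat) (x : T -> 'rV[R]_m) : Prop :=
  forall j : 'I_m, measurable_fun setT (fun w => x w ord0 j).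

(* mutual independence of the random vectors g_0, ..., g_{n-1}, stated on the
   generating pi-system of measurable rectangles of R^m (choosing a rectangle
   equal to the whole space for an index drops it from the family) *)
Definition mutually_independent_vecs (n m : nat) (g : 'I_n -> T -> 'rV[R]_m)
  : Prop :=
  forall B : 'I_n -> 'I_m -> set R,
    (forall i j, measurable (B i j)) ->
    P (\bigcap_(i in [set: 'I_n]) [set w | forall j, B i j (g i w ord0 j)]) =
    (\prod_(i < n) P [set w | forall j, B i j (g i w ord0 j)])%E.

End Defs.

Section Model.
Context {R : realType}.

Definition Delta (k d : nat) (mu : 'I_k -> 'rV[R]_d) : R :=
  inf [set l2norm (mu ab.1 - mu ab.2) | ab in [set ab : 'I_k * 'I_k | ab.1 != ab.2]].

Definition feasible (n k : nat) (F : 'M[R]_(n, k)) : Prop :=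
  (forall j a, F j a = 0 \/ F j a = 1) /\ (forall j, \sum_(a < k) F j a = 1).

Definition Fstar (n k : nat) (sigma : 'I_n -> 'I_k) : 'M[R]_(n, k) :=
  \matrix_(j, a) (if sigma j == a then 1 else 0).

Definition l1norm (n k : nat) (F : 'M[R]_(n, k)) : R :=
  \sum_(j < n) \sum_(a < k) `|F j a|.

(* eta(F) = sum_j sum_a ||hbar_j - mu_a||^2 F_ja, hbar_j = mu_{sigma j} + 4 g_j *)
Definition eta_ip (n k d : nat) (mu : 'I_k -> 'rV[R]_d) (sigma : 'I_n -> 'I_k)
  (gw : 'I_n -> 'rV[R]_d) (F : 'M[R]_(n, k)) : R :=
  \sum_(j < n) \sum_(a < k)
     l2norm (mu (sigma j) + 4 *: gw j - mu a) ^+ 2 * F j a.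

End Model.

(* Main.v *)
Require Import Defs.
From HB Require Import structures.
From mathcomp Require Import all_boot all_order all_algebra.
From mathcomp Require Import all_classical all_reals all_analysis.
From mathcomp Require Import Rstruct ring lra measurable_realfun.
Set Implicit Arguments. Unset Strict Implicit. Unset Printing Implicit Defensive.
Import Order.TTheory GRing.Theory Num.Theory.
Local Open Scope classical_set_scope.
Local Open Scope ring_scope.


Section Prob.
Context {R : realType} {d : measure_display} {T : measurableType d}
  (P : probability T R).

Lemma PE (A : set T) : measurable A -> P A = (fine (P A))%:E.
Proof. by move=> mA; rewrite fineK //; exact: fin_num_measure. Qed.

Lemma Pfine_ge0 (A : set T) : 0 <= fine (P A).
Proof. exact/fine_ge0/measure_ge0. Qed.

Lemma int_indic_sum (I : finType) (F : I -> set T) :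
  (forall i, measurable (F i)) ->
  (\int[P]_x (\sum_i (\1_(F i) x : R))%:E = (\sum_i fine (P (F i)))%:E)%E.
Proof.
move=> mF.
have mf : forall i, measurable_fun setT (fun x => (\1_(F i) x : R)%:E).
  by move=> i; apply/measurable_EFinP; exact: measurable_indic.
have f0 : forall i x, setT x -> (0 <= (\1_(F i) x : R)%:E)%E.
  by move=> i x _; rewrite lee_fin indicE ler0n.
under eq_integral do rewrite -sumEFin.
rewrite (@ge0_integral_sum _ _ _ P _ measurableT _ _ mf f0).
rewrite -sumEFin; apply: eq_bigr => i _.
by rewrite integral_indic // setIT -PE.
Qed.

Lemma union2_bound (A B1 B2 : set T) : measurable A -> measurable B1 ->
  measurable B2 -> A `<=` B1 `|` B2 ->
  fine (P A) <= fine (P B1) + fine (P B2).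
Proof.
move=> mA mB1 mB2 AB.
have h : (P A <= P B1 + P B2)%E.
  apply: le_trans (measureU2 _ mB1 mB2).
  apply: le_measure => //; rewrite inE //; exact: measurableU.
by move: h; rewrite (PE mA) (PE mB1) (PE mB2) -EFinD lee_fin.
Qed.

Lemma union_bound (I : finType) (F : I -> set T) (A : set T) :
  measurable A -> (forall i, measurable (F i)) ->
  (forall w, A w -> exists i, F i w) ->
  fine (P A) <= \sum_i fine (P (F i)).
Proof.
move=> mA mF AF.
have h01 : forall x, setT x -> (0 <= (\1_A x : R)%:E)%E.
  by move=> x _; rewrite lee_fin indicE ler0n.
have hm1 : measurable_fun setT (fun x => (\1_A x : R)%:E).
  by apply/measurable_EFinP; exact: measurable_indic.
have hm2 : measurable_fun setT (fun x => (\sum_i (\1_(F i) x : R))%:E).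
  apply/measurable_EFinP.
  by apply: measurable_sum => i; exact: measurable_indic.
have hle : forall x, setT x ->
    ((\1_A x : R)%:E <= (\sum_i (\1_(F i) x : R))%:E)%E.
  move=> x _; rewrite lee_fin indicE.
  have [Ax|Ax] := pselect (A x); last first.
    by rewrite (memNset Ax); apply: sumr_ge0 => i _; rewrite indicE ler0n.
  have [i Fix] := AF x Ax.
  rewrite (mem_set Ax) (bigD1 i) //= indicE mem_set // lerDl.
  by apply: sumr_ge0 => j _; rewrite indicE ler0n.
have h := ge0_le_integral P measurableT h01 hm1 hm2 hle.
rewrite integral_indic // setIT int_indic_sum // in h.
by rewrite -lee_fin -(PE mA); exact: h.
Qed.

End Prob.

Section Prob2.
Context {R : realType} {d : measure_display} {T : measurableType d}
  (P : probability T R).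

Lemma ereal_add_fin (x : \bar R) (y z : R) : (x + y%:E = z%:E)%E -> x = (z - y)%:E.
Proof. by case: x => [r| |] //= [<-]; rewrite addrK. Qed.

Lemma second_moment (I : finType) (E : I -> set T) (a : R) :
  (forall x, measurable (E x)) -> 0 < a ->
  a ^+ 2 * fine (P [set w | \sum_x fine (P (E x)) + a <= \sum_x (\1_(E x) w : R)]) <=
  \sum_x \sum_y fine (P (E x `&` E y)) - (\sum_x fine (P (E x))) ^+ 2.
Proof.
move=> mE a0.
set mu := \sum_x fine (P (E x)).
set S2 := \sum_x \sum_y fine (P (E x `&` E y)).
pose C := fun w => \sum_x (\1_(E x) w : R).
have mC : measurable_fun setT C.
  by apply: measurable_sum => x; exact: measurable_indic.
have C0 : forall w, 0 <= C w.
  by move=> w; apply: sumr_ge0 => x _; rewrite indicE ler0n.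
have mu0 : 0 <= mu by apply: sumr_ge0 => x _; exact: Pfine_ge0.
pose A := [set w | mu + a <= C w].
have mA : measurable A.
  rewrite -(setTI A).
  exact: (measurable_fun_le measurableT (measurable_cst (mu + a)) mC).
have intC : (\int[P]_w (C w)%:E = mu%:E)%E := int_indic_sum P mE.
have eqC2 : forall w, C w ^+ 2 = \sum_(xy : I * I) (\1_(E xy.1 `&` E xy.2) w : R).
  move=> w; rewrite /C expr2 mulr_suml.
  under eq_bigr do rewrite mulr_sumr.
  rewrite pair_big /=; apply: eq_bigr => -[x y] _ /=.
  by rewrite indicI.
have intC2 : (\int[P]_w (C w ^+ 2)%:E = S2%:E)%E.
  under eq_integral do rewrite eqC2.
  rewrite int_indic_sum; last by move=> -[x y]; exact: measurableI.
  by rewrite /S2 pair_big.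
have mCm : measurable_fun setT (fun w => C w - mu).
  exact: (measurable_funB mC (measurable_cst mu)).
have mD2 : measurable_fun setT (fun w => ((C w - mu) ^+ 2)%:E).
  apply/measurable_EFinP.
  exact: (measurable_funM mCm mCm).
have mC2 : measurable_fun setT (fun w => (C w ^+ 2)%:E).
  apply/measurable_EFinP.
  exact: (measurable_funM mC mC).
have mEC : measurable_fun setT (fun w => (C w)%:E).
  by apply/measurable_EFinP.
have m2C : measurable_fun setT (fun w => ((2 * mu) * C w)%:E).
  apply/measurable_EFinP.
  exact: (measurable_funM (measurable_cst (2 * mu)) mC).
have mmu : measurable_fun setT (fun w : T => (mu ^+ 2)%:E).
  exact: measurable_cst.
have e1 : (\int[P]_w (((C w - mu) ^+ 2)%:E + ((2 * mu) * C w)%:E) =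
           \int[P]_w ((C w ^+ 2)%:E + (mu ^+ 2)%:E))%E.
  by apply: eq_integral => w _; rewrite -!EFinD; congr EFin; ring.
rewrite (@ge0_integralD _ _ _ P _ measurableT) // in e1; last 2 first.
- by move=> w _; rewrite lee_fin sqr_ge0.
- by move=> w _; rewrite lee_fin mulr_ge0 // mulr_ge0.
rewrite (@ge0_integralD _ _ _ P _ measurableT) // in e1; last 2 first.
- by move=> w _; rewrite lee_fin sqr_ge0.
- by move=> w _; rewrite lee_fin sqr_ge0.
have i2C : (\int[P]_w ((2 * mu) * C w)%:E = (2 * mu)%:E * mu%:E)%E.
  under eq_integral do rewrite EFinM.
  have h0 : forall w, setT w -> (0 <= (C w)%:E)%E by move=> w _; rewrite lee_fin.
  have k0 : 0 <= 2 * mu by rewrite mulr_ge0.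
  rewrite (@ge0_integralZl_EFin _ _ _ P _ measurableT (fun w => (C w)%:E) h0 mEC (2 * mu) k0).
  by congr (_ * _)%E; exact: intC.
have icst : (\int[P]_w (mu ^+ 2)%:E = (mu ^+ 2)%:E)%E.
  rewrite integral_cst //.
  by rewrite [X in (_ * X)%E](_ : _ = 1%E) ?mule1 //; exact: probability_setT.
rewrite i2C intC2 icst -EFinM -EFinD in e1.
have hI := ereal_add_fin e1.
have hle : (\int[P]_w ((a ^+ 2 * \1_A w)%:E) <=
            \int[P]_w ((C w - mu) ^+ 2)%:E)%E.
  apply: ge0_le_integral => //.
  - by move=> w _; rewrite lee_fin mulr_ge0 // ?sqr_ge0 // indicE ler0n.
  - apply/measurable_EFinP.
    exact: (measurable_funM (measurable_cst (a ^+ 2)) (measurable_indic mA)).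
  - move=> w _; rewrite lee_fin indicE.
    have [Aw|Aw] := pselect (A w).
      rewrite (mem_set Aw) mulr1.
      have h : a <= C w - mu by move: Aw; rewrite /A /=; lra.
      have h2 : 0 <= C w - mu - a by lra.
      have h3 : 0 <= C w - mu + a by lra.
      have : 0 <= (C w - mu - a) * (C w - mu + a) by exact: mulr_ge0.
      by rewrite -subr_ge0 => ?; nra.
    by rewrite (memNset Aw) mulr0 sqr_ge0.
have e : (fun w => ((a ^+ 2 * \1_A w)%:E)) = (fun w => (a ^+ 2)%:E * (\1_A w : R)%:E)%E.
  by apply/funext => w; rewrite EFinM.
rewrite e in hle.
have hi0 : forall w, setT w -> (0 <= (\1_A w : R)%:E)%E.
  by move=> w _; rewrite lee_fin indicE ler0n.
have hmi : measurable_fun setT (fun w => (\1_A w : R)%:E).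
  by apply/measurable_EFinP; exact: measurable_indic.
have ha0 : 0 <= a ^+ 2 by rewrite sqr_ge0.
rewrite (@ge0_integralZl_EFin _ _ _ P _ measurableT _ hi0 hmi _ ha0) in hle.
rewrite integral_indic // setIT hI in hle.
rewrite -lee_fin EFinM -(PE P mA).
apply: (le_trans hle); rewrite lee_fin.
by rewrite /S2; lra.
Qed.

Lemma tail_exp (f : T -> R) (c v : R) : measurable_fun setT f -> 0 < c ->
  (\int[P]_w (expR (f w / c))%:E <= 2%:E)%E ->
  fine (P [set w | v <= f w]) <= 2 * expR (- (v / c)).
Proof.
move=> mf c0 hint.
pose A := [set w | v <= f w].
have mA : measurable A.
  rewrite -(setTI A).
  exact: (measurable_fun_le measurableT (measurable_cst v) mf).
have mexp : measurable_fun setT (fun w => expR (f w / c)).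
  exact: (measurableT_comp (@measurable_expR R) (measurable_funM mf (measurable_cst c^-1))).
have g0 : forall w, setT w -> (0 <= (expR (v / c) * \1_A w)%:E)%E.
  by move=> w _; rewrite lee_fin mulr_ge0 // ?expR_ge0 // indicE ler0n.
have gm : measurable_fun setT (fun w => (expR (v / c) * \1_A w)%:E).
  apply/measurable_EFinP.
  exact: (measurable_funM (measurable_cst (expR (v / c))) (measurable_indic mA)).
have gm2 : measurable_fun setT (fun w => (expR (f w / c))%:E).
  by apply/measurable_EFinP.
have gle : forall w, setT w -> ((expR (v / c) * \1_A w)%:E <= (expR (f w / c))%:E)%E.
  move=> w _; rewrite lee_fin indicE.
  have [Aw|Aw] := pselect (A w).
    by rewrite (mem_set Aw) mulr1 ler_expR ler_pM2r // ?invr_gt0.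
  by rewrite (memNset Aw) mulr0 expR_ge0.
have h1 := ge0_le_integral P measurableT g0 gm gm2 gle.
have e : (fun w => ((expR (v / c) * \1_A w)%:E)) = (fun w => (expR (v / c))%:E * (\1_A w : R)%:E)%E.
  by apply/funext => w; rewrite EFinM.
rewrite e in h1.
have hi0 : forall w, setT w -> (0 <= (\1_A w : R)%:E)%E.
  by move=> w _; rewrite lee_fin indicE ler0n.
have hmi : measurable_fun setT (fun w => (\1_A w : R)%:E).
  by apply/measurable_EFinP; exact: measurable_indic.
have ha0 : 0 <= expR (v / c) by rewrite expR_ge0.
rewrite (@ge0_integralZl_EFin _ _ _ P _ measurableT _ hi0 hmi _ ha0) in h1.
rewrite integral_indic // setIT in h1.
have h2 := le_trans h1 hint.
rewrite expRN ler_pdivlMr ?expR_gt0 // mulrC -lee_fin EFinM -(PE P mA).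
exact: h2.
Qed.

End Prob2.

Section Indep.
Context {R : realType} {d : measure_display} {T : measurableType d}
  (P : probability T R).

Lemma meas_forall (I : finType) (S : I -> set T) :
  (forall i, measurable (S i)) -> measurable [set w | forall i, S i w].
Proof.
move=> mS.
suff H : forall s : seq I, measurable [set w | forall i, i \in s -> S i w].
  have -> : [set w | forall i, S i w] = [set w | forall i, i \in enum I -> S i w].
    apply/seteqP; split => w /= H' i.
    - by move=> _; exact: H'.
    - by apply: H'; rewrite mem_enum.
  exact: H.
elim => [|a s IH].
  have -> : [set w | forall i, i \in [::] -> S i w] = setT.
    by apply/seteqP; split => w //.
  exact: measurableT.
have -> : [set w | forall i, i \in a :: s -> S i w] =
          S a `&` [set w | forall i, i \in s -> S i w].
  apply/seteqP; split => w /=.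
  - move=> H; split; first by apply: H; rewrite mem_head.
    by move=> i iS; apply: H; rewrite in_cons iS orbT.
  - move=> [Sa H] i; rewrite in_cons => /orP[/eqP -> //|iS]; exact: H.
exact: measurableI.
Qed.

Definition rect (m : nat) (h : T -> 'rV[R]_m) : set (set T) :=
  [set A | exists B : 'I_m -> set R, (forall c, measurable (B c)) /\
     A = [set w | forall c, B c (h w ord0 c)]].

Lemma rectI m (h : T -> 'rV[R]_m) : setI_closed (rect h).
Proof.
move=> A1 A2 [B1 [mB1 ->]] [B2 [mB2 ->]].
exists (fun c => B1 c `&` B2 c); split; first by move=> c; exact: measurableI.
apply/seteqP; split => w /=.
- by move=> [H1 H2] c; split; [exact: H1|exact: H2].
- by move=> H; split => c; have [] := H c.
Qed.

Lemma rect_meas m (h : T -> 'rV[R]_m) :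
  (forall c, measurable_fun setT (fun w => h w ord0 c)) ->
  forall A, rect h A -> measurable A.
Proof.
move=> mh A [B [mB ->]].
apply: (meas_forall (S := fun c => [set w | B c (h w ord0 c)])) => c.
rewrite -(setTI [set w | _]).
exact: (mh c measurableT (B c) (mB c)).
Qed.

Lemma PD (A B : set T) : measurable A -> measurable B -> B `<=` A ->
  P (A `\` B) = (P A - P B)%E.
Proof.
move=> mA mB BA.
have AB : A `&` B = B.
  apply/seteqP; split => w /=; first by case.
  by move=> Bw; split => //; exact: BA.
rewrite -{2}AB.
apply: measureD => //.
apply: (le_lt_trans (probability_le1 P mA)); exact: ltry.
Qed.

Lemma lambda_indep (B : set T) : measurable B ->
  lambda_system setT [set A | measurable A /\ P (A `&` B) = (P A * P B)%E].
Proof.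
move=> mB; split.
- by [].
- split; first exact: measurableT.
  rewrite setTI [X in (X * _)%E](_ : _ = 1%E) ?mul1e //.
  exact: probability_setT.
- move=> X Y YX [mX hX] [mY hY]; split; first exact: measurableD.
  have e1 : (X `\` Y) `&` B = (X `&` B) `\` (Y `&` B).
    by apply/seteqP; split => w /=; tauto.
  have YBX : Y `&` B `<=` X `&` B.
    by move=> w [Yw Bw]; split => //; exact: YX.
  rewrite e1 (PD (measurableI _ _ mX mB) (measurableI _ _ mY mB) YBX) (PD mX mY YX).
  rewrite hX hY (PE P mX) (PE P mY) (PE P mB).
  by rewrite -!EFinM -!EFinB -?EFinM; congr EFin; ring.
- move=> F ndF HF; split.
    by apply: bigcupT_measurable => i; case: (HF i).
  have mF i : measurable (F i) by case: (HF i).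
  have h1 : (fun n => P (F n `&` B)) @ \oo --> P ((\bigcup_n F n) `&` B).
    rewrite setI_bigcupl.
    apply: nondecreasing_cvg_mu.
    - by move=> i; exact: measurableI.
    - by apply: bigcupT_measurable => i; exact: measurableI.
    - move=> m n mn; apply/subsetPset; apply: setSI.
      by apply/subsetPset; exact: ndF.
  have h3 : (fun n => (P (F n) * P B)%E) @ \oo --> (P (\bigcup_n F n) * P B)%E.
    apply: cvgeM.
    - apply: mule_def_fin; last exact: fin_num_measure.
      by apply: fin_num_measure; exact: bigcupT_measurable.
    - apply: nondecreasing_cvg_mu => //.
      by apply: bigcupT_measurable.
    - exact: cvg_cst.
  have e : (fun n => P (F n `&` B)) = (fun n => (P (F n) * P B)%E).
    by apply/funext => n; case: (HF n).
  rewrite e in h1.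
  exact: (cvg_unique (@ereal_hausdorff R) h1 h3).
Qed.

Lemma indep_base (n m : nat) (g : 'I_n -> T -> 'rV[R]_m) (i j : 'I_n) :
  mutually_independent_vecs P g -> i != j ->
  forall A B, rect (g i) A -> rect (g j) B -> P (A `&` B) = (P A * P B)%E.
Proof.
move=> Hind ij A B [BA [mBA ->]] [BB [mBB ->]].
have ji : (j == i) = false by rewrite eq_sym; exact: negbTE.
pose B' := fun (i' : 'I_n) => if i' == i then BA
  else if i' == j then BB else (fun _ : 'I_m => (setT : set R)).
have mB' : forall i' c, measurable (B' i' c).
  move=> i' c; rewrite /B'; case: ifP => _; first exact: mBA.
  by case: ifP => _; [exact: mBB|exact: measurableT].
have H := Hind B' mB'.
have e1 : \bigcap_(i' in [set: 'I_n]) [set w | forall c, B' i' c (g i' w ord0 c)] =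
   [set w | forall c, BA c (g i w ord0 c)] `&` [set w | forall c, BB c (g j w ord0 c)].
  apply/seteqP; split => w /=.
  - move=> Hw; split => c.
    + by have := Hw i Logic.I c; rewrite /B' eqxx.
    + by have := Hw j Logic.I c; rewrite /B' ji eqxx.
  - move=> [HA HB] i' _ c; rewrite /B'.
    case: (eqVneq i' i) => [->|_]; first exact: HA.
    case: (eqVneq i' j) => [->|_]; first exact: HB.
    by [].
rewrite e1 in H; rewrite H.
rewrite (bigD1 i) //= (bigD1 j) /=; last by rewrite ji.
rewrite big1 ?mule1.
  by rewrite /B' eqxx ji eqxx.
move=> i' /andP[]; rewrite ?andTb => ni nj.
rewrite /B' (negbTE ni) (negbTE nj).
have -> : [set w | forall c : 'I_m, (setT : set R) (g i' w ord0 c)] = setT.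
  by apply/seteqP; split.
exact: probability_setT.
Qed.

Lemma sigma_meas (m : nat) (h : T -> 'rV[R]_m) :
  (forall c, measurable_fun setT (fun w => h w ord0 c)) ->
  forall A, <<s rect h >> A -> measurable A.
Proof.
move=> mh A sA.
have := lambda_system_subset (@rectI _ h) (lambda_indep measurableT) _ _ sA.
case => //.
- move=> B rB; split; first by apply: (rect_meas mh).
  rewrite setIT [X in (_ * X)%E](_ : _ = 1%E) ?mule1 //.
  exact: probability_setT.
Qed.

Lemma indep_sigma (n m : nat) (g : 'I_n -> T -> 'rV[R]_m) (i j : 'I_n) :
  (forall i, random_vec (g i)) ->
  mutually_independent_vecs P g -> i != j ->
  forall A B, <<s rect (g i) >> A -> <<s rect (g j) >> B ->
  P (A `&` B) = (P A * P B)%E.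
Proof.
move=> mg Hind ij.
have step1 : forall B, rect (g j) B -> forall A, <<s rect (g i) >> A ->
    measurable A /\ P (A `&` B) = (P A * P B)%E.
  move=> B rB.
  have mB := rect_meas (mg j) rB.
  apply: (lambda_system_subset (@rectI _ (g i)) (lambda_indep mB)) => //.
  move=> A rA; split; first by apply: (rect_meas (mg i)).
  exact: (indep_base Hind ij rA rB).
have step2 : forall A, <<s rect (g i) >> A -> forall B, <<s rect (g j) >> B ->
    measurable B /\ P (B `&` A) = (P B * P A)%E.
  move=> A sA.
  have mA := sigma_meas (mg i) sA.
  apply: (lambda_system_subset (@rectI _ (g j)) (lambda_indep mA)) => //.
  move=> B rB; split; first by apply: (rect_meas (mg j)).
  rewrite setIC muleC.
  by have [] := step1 B rB A sA.
move=> A B sA sB.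
have [_ h] := step2 A sA B sB.
by rewrite setIC h muleC.
Qed.

Lemma rect_coord (m : nat) (h : T -> 'rV[R]_m) (c : 'I_m) :
  measurable_fun (setT : set (g_sigma_algebraType (rect h))) (fun w => h w ord0 c).
Proof.
move=> _ Y mY.
change (<<s rect h >> (setT `&` (fun w => h w ord0 c) @^-1` Y)).
apply: sub_sigma_algebra.
exists (fun c' => if c' == c then Y else setT); split.
- by move=> c'; case: ifP => _ //; exact: measurableT.
- apply/seteqP; split => w /=.
  + by move=> [_ Yw] c'; case: ifP => [/eqP -> //|_].
  + by move=> H; split => //; have := H c; rewrite eqxx.
Qed.

Lemma rect_event (m : nat) (h : T -> 'rV[R]_m) (u : 'rV[R]_m) (v : R) :
  <<s rect h >> [set w | v <= dotv (h w) u ^+ 2].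
Proof.
have mX : measurable_fun (setT : set (g_sigma_algebraType (rect h)))
    (fun w => dotv (h w) u).
  rewrite /dotv; apply: measurable_sum => c.
  apply: measurable_funM; [exact: rect_coord|exact: measurable_cst].
have mX2 : measurable_fun (setT : set (g_sigma_algebraType (rect h)))
    (fun w => dotv (h w) u ^+ 2) := measurable_funM mX mX.
have := measurable_fun_le measurableT (measurable_cst v) mX2.
by rewrite setTI.
Qed.

Lemma dot_meas (m : nat) (h : T -> 'rV[R]_m) (u : 'rV[R]_m) :
  random_vec h -> measurable_fun setT (fun w => dotv (h w) u).
Proof.
move=> mh; rewrite /dotv; apply: measurable_sum => c.
exact: (measurable_funM (mh c) (measurable_cst (u ord0 c))).
Qed.

End Indep.

Section Det.
Context {R : realType}.

Definition uvec (k d : nat) (mu : 'I_k -> 'rV[R]_d) (a b : 'I_k) : 'rV[R]_d :=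
  (l2norm (mu a - mu b))^-1 *: (mu a - mu b).
Definition Xf (k d : nat) (mu : 'I_k -> 'rV[R]_d) (a b : 'I_k) (v : 'rV[R]_d) : R :=
  dotv v (uvec mu a b).

Lemma l2norm_ge0 m (v : 'rV[R]_m) : 0 <= l2norm v.
Proof. exact: sqrtr_ge0. Qed.

Lemma l2norm_sq m (v : 'rV[R]_m) : l2norm v ^+ 2 = \sum_j v ord0 j ^+ 2.
Proof. by rewrite /l2norm sqr_sqrtr //; apply: sumr_ge0 => j _; exact: sqr_ge0. Qed.

Lemma l2norm_scale m (c : R) (v : 'rV[R]_m) : l2norm (c *: v) = `|c| * l2norm v.
Proof.
rewrite /l2norm.
have -> : \sum_j (c *: v) ord0 j ^+ 2 = c ^+ 2 * \sum_j v ord0 j ^+ 2.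
  by rewrite mulr_sumr; apply: eq_bigr => j _; rewrite mxE exprMn.
by rewrite sqrtrM ?sqr_ge0 // sqrtr_sqr.
Qed.

Lemma uvec_norm k d (mu : 'I_k -> 'rV[R]_d) a b :
  l2norm (mu a - mu b) != 0 -> l2norm (uvec mu a b) = 1.
Proof.
move=> h; rewrite /uvec l2norm_scale ger0_norm ?invr_ge0 ?l2norm_ge0 //.
by rewrite mulVf.
Qed.

Lemma uvec0 k d (mu : 'I_k -> 'rV[R]_d) a b :
  l2norm (mu a - mu b) = 0 -> uvec mu a b = 0.
Proof. by rewrite /uvec => ->; rewrite invr0 scale0r. Qed.

Lemma key_ineq k d (mu : 'I_k -> 'rV[R]_d) (a b : 'I_k) (v : 'rV[R]_d) (D0 : R) :
  0 <= D0 -> D0 <= l2norm (mu a - mu b) -> 0 < l2norm (mu a - mu b) ->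
  D0 ^+ 2 / 2 - 32 * Xf mu a b v ^+ 2 <=
  l2norm (mu a + 4 *: v - mu b) ^+ 2 - l2norm (mu a + 4 *: v - mu a) ^+ 2.
Proof.
move=> D00 DD Dpos.
set D := l2norm (mu a - mu b) in DD Dpos *.
have e1 : l2norm (mu a + 4 *: v - mu b) ^+ 2 - l2norm (mu a + 4 *: v - mu a) ^+ 2 =
    D ^+ 2 + 8 * \sum_j v ord0 j * (mu a - mu b) ord0 j.
  rewrite /D !l2norm_sq -sumrB mulr_sumr -big_split /=.
  by apply: eq_bigr => j _; rewrite !mxE; ring.
have e2 : \sum_j v ord0 j * (mu a - mu b) ord0 j = D * Xf mu a b v.
  rewrite /Xf /dotv /uvec mulr_sumr; apply: eq_bigr => j _.
  have Dn : D != 0 by exact: lt0r_neq0.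
  have aux : forall x y : R, x * y = D * (x * (D^-1 * y)).
    by move=> x y; rewrite [D * (_ * _)]mulrCA [D * (_ * _)]mulrA mulfV // mul1r.
  rewrite !mxE; exact: aux.
rewrite e1 e2.
set x := Xf mu a b v.
have h1 : 0 <= (D + 8 * x) ^+ 2 := sqr_ge0 _.
have h2 : 0 <= (D - D0) * (D + D0) by apply: mulr_ge0; lra.
nra.
Qed.

Definition bR (b : bool) : R := (b : nat)%:R.

Arguments bR : simpl never.

Lemma bR_ge0 b : 0 <= bR b.
Proof. exact: ler0n. Qed.

Lemma count_bound (L c x : R) (N : nat) : 0 < c -> x <= L + N%:R * c ->
  x <= L + c * \sum_(l < N) bR (L + l%:R * c <= x).
Proof.
move=> c0 hx.
suff : x <= L + c * \sum_(l < N) bR (L + l%:R * c <= x) \/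
       \sum_(l < N) bR (L + l%:R * c <= x) = N%:R.
  by case => // ->; rewrite mulrC.
elim: N hx => [|N IH] hx.
  by right; rewrite big_ord0.
rewrite big_ord_recr /=.
case: (lerP x (L + N%:R * c)) => hN.
  case: (IH hN) => [h|h].
    left; apply: (le_trans h); rewrite lerD2l; apply: ler_wpM2l; first exact: ltW.
    by rewrite lerDl bR_ge0.
  left; rewrite h; apply: (le_trans hN).
  rewrite lerD2l [N%:R * c]mulrC; apply: ler_wpM2l; first exact: ltW.
  by rewrite lerDl bR_ge0.
have hNx : L + N%:R * c <= x by exact: ltW.
right.
have hall : forall l : 'I_N, bR (L + l%:R * c <= x) = 1.
  move=> l; rewrite /bR; suff -> : (L + l%:R * c <= x) = true by [].
  apply/idP; apply: le_trans hNx; rewrite lerD2l.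
  apply: ler_wpM2r; first exact: ltW.
  by rewrite ler_nat; exact: ltnW (ltn_ord l).
rewrite /bR hNx /= (eq_bigr (fun _ => 1)); last by move=> l _; exact: hall.
by rewrite sumr_const card_ord /= -natrD addn1.
Qed.

Lemma feasible_row n k (F : 'M[R]_(n, k)) : feasible F ->
  forall j, exists a, forall b, F j b = (b == a)%:R.
Proof.
case=> F01 Fs j.
have [[a Fa]|nA] := pselect (exists a, F j a = 1); last first.
  exfalso.
  have h0 : \sum_a F j a = 0.
    apply: big1 => a _; case: (F01 j a) => // h; exfalso; apply: nA; by exists a.
  by move: (Fs j); rewrite h0 => /eqP; rewrite eq_sym oner_eq0.
exists a => b.
case: (eqVneq b a) => [->|ba] /=; first by rewrite Fa.
have hs := Fs j; rewrite (bigD1 a) //= Fa in hs.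
have h0 : \sum_(i | i != a) F j i = 0.
  by apply: (addrI 1); rewrite addr0.
have := psumr_eq0P _ h0 ba.
apply => i _; by case: (F01 j i) => ->.
Qed.

End Det.

Section Det2.
Context {R : realType}.

Lemma eta_row n k d (mu : 'I_k -> 'rV[R]_d) (sigma : 'I_n -> 'I_k)
  (G : 'I_n -> 'rV[R]_d) (F : 'M[R]_(n, k)) (r : 'I_n -> 'I_k) :
  (forall j b, F j b = (b == r j)%:R) ->
  eta_ip mu sigma G F = \sum_j l2norm (mu (sigma j) + 4 *: G j - mu (r j)) ^+ 2.
Proof.
move=> hr; rewrite /eta_ip; apply: eq_bigr => j _.
rewrite (bigD1 (r j)) //= hr eqxx /= mulr1n mulr1 big1 ?addr0 // => b /negbTE hb.
by rewrite hr hb /= mulr0n mulr0.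
Qed.

Lemma eta_star n k d (mu : 'I_k -> 'rV[R]_d) (sigma : 'I_n -> 'I_k)
  (G : 'I_n -> 'rV[R]_d) :
  eta_ip mu sigma G (Fstar sigma) =
  \sum_j l2norm (mu (sigma j) + 4 *: G j - mu (sigma j)) ^+ 2.
Proof.
rewrite /eta_ip; apply: eq_bigr => j _.
rewrite (bigD1 (sigma j)) //= mxE eqxx /= mulr1 big1 ?addr0 // => b hb.
rewrite mxE; case: eqP => [e|_]; last by rewrite mulr0.
by rewrite e eqxx in hb.
Qed.

Lemma l1_diff n k (F : 'M[R]_(n, k)) (sigma : 'I_n -> 'I_k) (r : 'I_n -> 'I_k) :
  (forall j b, F j b = (b == r j)%:R) ->
  l1norm (F - Fstar sigma) = 2 * \sum_j bR (r j != sigma j).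
Proof.
move=> hr; rewrite /l1norm mulr_sumr; apply: eq_bigr => j _.
have ent : forall b, (F - Fstar sigma) j b = (b == r j)%:R - (b == sigma j)%:R.
  move=> b; rewrite !mxE hr [sigma j == b]eq_sym.
  by case: (b == sigma j).
under eq_bigr do rewrite ent.
case: (eqVneq (r j) (sigma j)) => [e|ne].
  rewrite e ?eqxx /bR /= mulr0n mulr0; apply: big1 => b _.
  by rewrite subrr normr0.
have e1 : (r j == sigma j) = false by exact: negbTE.
have e2 : (sigma j == r j) = false by rewrite eq_sym.
rewrite /bR ?ne /= mulr1n.
rewrite (bigD1 (r j)) //= (bigD1 (sigma j)) /=; last by rewrite e2.
rewrite big1 ?addr0; last first.
  move=> b /andP[]; rewrite ?andTb => hb1 hb2.
  by rewrite (negbTE hb1) (negbTE hb2) /= mulr0n subrr normr0.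
rewrite !eqxx ?e1 ?e2 /= mulr1n mulr0n subr0 sub0r normrN normr1.
lra.
Qed.

Lemma l1_star n k (sigma : 'I_n -> 'I_k) :
  l1norm (Fstar sigma : 'M[R]_(n, k)) = n%:R.
Proof.
rewrite /l1norm (eq_bigr (fun _ => 1)); last first.
  move=> j _; rewrite (bigD1 (sigma j)) //= mxE eqxx /= normr1 big1 ?addr0 //.
  move=> b hb; rewrite mxE; case: eqP => [e|_]; last by rewrite normr0.
  by rewrite e eqxx in hb.
by rewrite sumr_const card_ord.
Qed.

Lemma det_main n k d (mu : 'I_k -> 'rV[R]_d) (sigma : 'I_n -> 'I_k)
  (G : 'I_n -> 'rV[R]_d) (F : 'M[R]_(n, k)) (D0 c L : R) (N : nat) :
  (0 < n)%N -> feasible F -> 0 < D0 -> 0 < c -> L = D0 ^+ 2 / 128 ->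
  (forall a b, a != b -> D0 <= l2norm (mu a - mu b)) ->
  (forall j (p : 'I_k * 'I_k), Xf mu p.1 p.2 (G j) ^+ 2 <= L + N%:R * c) ->
  eta_ip mu sigma G F <= eta_ip mu sigma G (Fstar sigma) ->
  l1norm (F - Fstar sigma) / l1norm (Fstar sigma : 'M[R]_(n, k)) <=
  256 * c / (n%:R * D0 ^+ 2) *
    \sum_j \sum_(p : 'I_k * 'I_k) \sum_(l < N)
       bR (L + l%:R * c <= Xf mu p.1 p.2 (G j) ^+ 2).
Proof.
move=> n0 hF D0p c0 hL hD hcap heta.
have [r hr] := choice (feasible_row hF).
set E := (X in _ <= _ * X).
pose cnt := fun j (p : 'I_k * 'I_k) =>
  (\sum_(l < N) bR (L + l%:R * c <= Xf mu p.1 p.2 (G j) ^+ 2) : R).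
have EE : E = \sum_j \sum_p cnt j p by [].
have cnt0 : forall j p, 0 <= cnt j p.
  by move=> j p; apply: sumr_ge0 => l _; exact: bR_ge0.
pose cost := fun j a => l2norm (mu (sigma j) + 4 *: G j - mu a) ^+ 2.
have hdiff : forall j, bR (r j != sigma j) * (D0 ^+ 2 / 4) - 32 * c * \sum_p cnt j p
    <= cost j (r j) - cost j (sigma j).
  move=> j.
  have S0 : 0 <= \sum_p cnt j p by apply: sumr_ge0 => p _; exact: cnt0.
  case: (eqVneq (r j) (sigma j)) => [e|ne].
    rewrite e subrr /bR ?eqxx /= mulr0n mul0r sub0r oppr_le0.
    by apply: mulr_ge0 => //; apply: mulr_ge0 => //; exact: ltW.
  rewrite /bR ?ne /= mulr1n mul1r.
  have ne' : sigma j != r j by rewrite eq_sym.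
  have hDj := hD _ _ ne'.
  have Dpos : 0 < l2norm (mu (sigma j) - mu (r j)) := lt_le_trans D0p hDj.
  have hk := @key_ineq R k d mu (sigma j) (r j) (G j) D0 (ltW D0p) hDj Dpos.
  have hX := hcap j (sigma j, r j); rewrite /= in hX.
  have hc := count_bound c0 hX.
  have hle : cnt j (sigma j, r j) <= \sum_p cnt j p.
    rewrite (bigD1 (sigma j, r j)) //= lerDl.
    by apply: sumr_ge0 => p _; exact: cnt0.
  have hcle : c * cnt j (sigma j, r j) <= c * \sum_p cnt j p.
    by apply: ler_wpM2l => //; exact: ltW.
  rewrite /cost.
  move: hc hk hcle; rewrite /cnt /= hL => hc hk hcle.
  nra.
have hsum : \sum_j (bR (r j != sigma j) * (D0 ^+ 2 / 4) - 32 * c * \sum_p cnt j p)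
    <= \sum_j (cost j (r j) - cost j (sigma j)).
  by apply: ler_sum => j _; exact: hdiff.
rewrite sumrB -mulr_suml -mulr_sumr sumrB in hsum.
rewrite (@eta_row n k d mu sigma G F r hr) eta_star in heta.
have heta' : \sum_j cost j (r j) <= \sum_j cost j (sigma j) := heta.
have claim : (\sum_j bR (r j != sigma j)) * (D0 ^+ 2 / 4) <= 32 * c * E.
  rewrite EE; lra.
rewrite (@l1_diff n k F sigma r hr) l1_star.
have n0' : 0 < n%:R :> R by rewrite ltr0n.
have D2 : 0 < D0 ^+ 2 by exact: exprn_gt0.
have eR : 256 * c / (n%:R * D0 ^+ 2) * E = (256 * c * E / D0 ^+ 2) / n%:R.
  by rewrite invfM; ring.
rewrite eR; apply: ler_wpM2r; first by rewrite invr_ge0 ler0n.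
rewrite ler_pdivlMr //.
nra.
Qed.

End Det2.

Section Misc.
Context {R : realType}.

Lemma Delta_le k d (mu : 'I_k -> 'rV[R]_d) (a b : 'I_k) :
  a != b -> Delta mu <= l2norm (mu a - mu b).
Proof.
move=> ab; rewrite /Delta.
apply: ge_inf.
  exists 0 => x [[a' b'] _ <-]; exact: l2norm_ge0.
by exists (a, b).
Qed.

Lemma Delta_ge0 k d (mu : 'I_k -> 'rV[R]_d) : (1 < k)%N -> 0 <= Delta mu.
Proof.
move=> k1; rewrite /Delta; apply: lb_le_inf.
  have k0 : (0 < k)%N by apply: ltn_trans k1.
  exists (l2norm (mu (Ordinal k0) - mu (Ordinal k1))).
  by exists (Ordinal k0, Ordinal k1).
by move=> x [[a' b'] _ <-]; exact: l2norm_ge0.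
Qed.

Lemma sum_exp_half (N : nat) : \sum_(l < N) expR (- (l%:R / 2)) <= 3 :> R.
Proof.
set r := expR (- (1 / 2)) : R.
have rE : forall l : nat, expR (- (l%:R / 2)) = r ^+ l.
  by move=> l; rewrite /r -expRM_natl; congr expR; rewrite mulrN mul1r.
under eq_bigr do rewrite rE.
have r0 : 0 < r by exact: expR_gt0.
have e0 : 3 / 2 <= expR (1 / 2) :> R.
  by apply: le_trans (expR_ge1Dx _); lra.
have hre : r * expR (1 / 2) = 1 by rewrite /r -exp.expRD addNr exp.expR0.
have r23 : r <= 2 / 3 by nra.
have hs := subrX1 r N.
set S := \sum_(i < N) r ^+ i in hs *.
have S0 : 0 <= S by apply: sumr_ge0 => i _; exact: exprn_ge0 (ltW r0).
have hS : S * (1 - r) = 1 - r ^+ N by lra.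
have rN : 0 <= r ^+ N by exact: exprn_ge0 (ltW r0).
nra.
Qed.

End Misc.

Section Misc2.
Context {R : realType}.

Lemma sum_pair (J Q : finType) (F : J * Q -> R) :
  \sum_x F x = \sum_j \sum_q F (j, q).
Proof. by rewrite pair_big; apply: eq_bigr => -[j q]. Qed.

Lemma var_split (J Q : finType) (p : J * Q -> R) (pr : J * Q -> J * Q -> R) :
  (forall x, 0 <= p x) ->
  (forall x y, x.1 != y.1 -> pr x y = p x * p y) ->
  \sum_x \sum_y pr x y - (\sum_x p x) ^+ 2 <=
  \sum_j \sum_q \sum_q' pr (j, q) (j, q').
Proof.
move=> p0 hind.
have e1 : (\sum_x p x) ^+ 2 = \sum_x \sum_y p x * p y.
  by rewrite expr2 mulr_suml; apply: eq_bigr => x _; rewrite mulr_sumr.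
rewrite e1 -sumrB.
under eq_bigr do rewrite -sumrB.
rewrite sum_pair; apply: ler_sum => j _; apply: ler_sum => q _.
rewrite sum_pair (bigD1 j) //=.
rewrite [X in _ + X]big1 ?addr0; last first.
  move=> j' hj'; apply: big1 => q' _; rewrite hind ?subrr //=.
  by rewrite eq_sym.
apply: ler_sum => q' _.
have := mulr_ge0 (p0 (j, q)) (p0 (j, q')); lra.
Qed.

Context {dT : measure_display} {T : measurableType dT} (P : probability T R).

Lemma psi2_int (X : T -> R) (tau : R) : 0 < tau -> measurable_fun setT X ->
  (psi2_norm P X <= tau%:E)%E ->
  (\int[P]_w (expR (X w ^+ 2 / (4 * tau ^+ 2)))%:E <= 2%:E)%E.
Proof.
move=> t0 mX hps.
have hlt : (psi2_norm P X < (2 * tau)%:E)%E.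
  by apply: le_lt_trans hps _; rewrite lte_fin; lra.
move: hlt; rewrite /psi2_norm => /ereal_inf_lt [y [t [t0' hint] <-]].
rewrite lte_fin => tlt.
apply: le_trans hint.
have mX2 : measurable_fun setT (fun w => X w ^+ 2) := measurable_funM mX mX.
have h0 : forall w, setT w -> (0 <= (expR (X w ^+ 2 / (4 * tau ^+ 2)))%:E)%E.
  by move=> w _; rewrite lee_fin expR_ge0.
have m1 : measurable_fun setT (fun w => (expR (X w ^+ 2 / (4 * tau ^+ 2)))%:E).
  apply/measurable_EFinP.
  exact: (measurableT_comp (@measurable_expR R) (measurable_funM mX2 (measurable_cst _))).
have m2 : measurable_fun setT (fun w => (expR (X w ^+ 2 / t ^+ 2))%:E).
  apply/measurable_EFinP.
  exact: (measurableT_comp (@measurable_expR R) (measurable_funM mX2 (measurable_cst _))).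
have hle : forall w, setT w ->
    ((expR (X w ^+ 2 / (4 * tau ^+ 2)))%:E <= (expR (X w ^+ 2 / t ^+ 2))%:E)%E.
  move=> w _; rewrite lee_fin ler_expR.
  apply: ler_wpM2l; first exact: sqr_ge0.
  have ht : t ^+ 2 <= 4 * tau ^+ 2 by nra.
  rewrite lef_pV2 ?posrE //; first by rewrite mulr_gt0 // exprn_gt0.
  exact: exprn_gt0.
exact: (ge0_le_integral P measurableT h0 m1 m2 hle).
Qed.

Lemma int_bound (m : nat) (x : T -> 'rV[R]_m) (u : 'rV[R]_m) (tau : R) :
  0 < tau -> random_vec x -> (psi2_norm_vec P x <= tau%:E)%E ->
  (l2norm u = 1 \/ u = 0) ->
  (\int[P]_w (expR (dotv (x w) u ^+ 2 / (4 * tau ^+ 2)))%:E <= 2%:E)%E.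
Proof.
move=> t0 mx hv [hu|->].
  apply: psi2_int => //; first by apply: dot_meas.
  apply: le_trans hv; apply: ereal_sup_ge.
  by exists (psi2_norm P (fun w => dotv (x w) u)) => //; exists u.
have -> : (fun w => (expR (dotv (x w) 0 ^+ 2 / (4 * tau ^+ 2)))%:E) = cst 1%:E.
  apply/funext => w; rewrite /dotv big1; last by move=> j _; rewrite mxE mulr0.
  by rewrite expr2 mulr0 mul0r exp.expR0.
rewrite integral_cst //.
rewrite [X in (_ * X)%E](_ : _ = 1%E); last exact: probability_setT.
by rewrite mul1e lee_fin; lra.
Qed.

Lemma tail_model (n k d : nat) (mu : 'I_k -> 'rV[R]_d)
  (g : 'I_n -> T -> 'rV[R]_d) (tau : R) (j : 'I_n) (a b : 'I_k) (v : R) :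
  0 < tau -> random_vec (g j) -> (psi2_norm_vec P (g j) <= tau%:E)%E ->
  fine (P [set w | v <= Xf mu a b (g j w) ^+ 2]) <= 2 * expR (- (v / (4 * tau ^+ 2))).
Proof.
move=> t0 mg hp.
have mX : measurable_fun setT (fun w => Xf mu a b (g j w)) by apply: dot_meas.
apply: (@tail_exp R dT T P (fun w => Xf mu a b (g j w) ^+ 2) (4 * tau ^+ 2) v).
- exact: (measurable_funM mX mX).
- by rewrite mulr_gt0 // exprn_gt0.
- apply: int_bound => //.
  have [h0|hn] := eqVneq (l2norm (mu a - mu b)) 0.
    by right; exact: uvec0.
  by left; exact: uvec_norm.
Qed.

End Misc2.

Section Consts.
Context {R : realType}.

Lemma final_const (s k : R) : 0 < s ^+ 2 -> 0 <= k -> k <= s ^+ 2 ->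
  k ^+ 2 / s ^+ 2 * expR (- (s ^+ 2 / 1024)) <= 2048 * expR (- (s ^+ 2 / 2048)).
Proof.
move=> s0 k0 ks.
set y := s ^+ 2 / 2048.
have y0 : 0 < y.
  rewrite /y; apply: divr_gt0; [exact: s0|lra].
set u := expR (- y).
have u0 : 0 < u := expR_gt0 _.
have e1 : expR (- (s ^+ 2 / 1024)) = u * u.
  by rewrite /u -exp.expRD; congr expR; rewrite /y; lra.
have hk : k ^+ 2 / s ^+ 2 <= s ^+ 2.
  rewrite ler_pdivrMr //.
  have : k * k <= s ^+ 2 * s ^+ 2 by apply: ler_pM.
  by rewrite expr2.
have hy : y * u <= 1.
  have h1 : 1 + y <= expR y := expR_ge1Dx y.
  have h2 : expR y * u = 1 by rewrite /u -exp.expRD subrr exp.expR0.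
  have h3 : 0 <= (expR y - 1 - y) * u by apply: mulr_ge0; [lra|exact: ltW].
  lra.
have h2048 : (2048 : R) != 0 by rewrite pnatr_eq0.
have sy : s ^+ 2 = 2048 * y by rewrite /y mulrC divfK.
set q := k ^+ 2 / s ^+ 2 in hk *.
have q0 : 0 <= q by rewrite /q divr_ge0 // ?sqr_ge0 // ltW.
rewrite e1.
have h1 : 0 <= (2048 * y - q) * (u * u).
  by apply: mulr_ge0; [lra|apply: mulr_ge0; exact: ltW].
have h2 : 0 <= (1 - y * u) * u by apply: mulr_ge0; [lra|exact: ltW].
lra.
Qed.

Lemma sum_h (k N : nat) :
  \sum_(q : ('I_k * 'I_k) * 'I_N) expR (- ((q.2 : nat)%:R / 2)) <= 3 * k%:R ^+ 2 :> R.
Proof.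
rewrite sum_pair.
have h : \sum_(p : 'I_k * 'I_k) \sum_(l < N) expR (- (((p, l).2 : nat)%:R / 2))
    <= \sum_(p : 'I_k * 'I_k) (3 : R).
  by apply: ler_sum => p _; exact: sum_exp_half.
apply: (le_trans h).
by rewrite sumr_const card_prod card_ord -(mulr_natr (3 : R) (k * k)) natrM expr2.
Qed.

End Consts.

Lemma double_sum {R : realType} (Q : finType) (f : Q -> R) (K : R) :
  \sum_q \sum_q' K * (f q * f q') = K * (\sum_q f q) ^+ 2.
Proof.
rewrite expr2 mulr_suml mulr_sumr; apply: eq_bigr => q _.
by rewrite mulr_sumr mulr_sumr.
Qed.

Lemma meas_le_cst {d} {T : measurableType d} {R : realType} (f : T -> R) (v : R) :
  measurable_fun setT f -> measurable [set w | f w <= v].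
Proof.
move=> mf; rewrite -(setTI [set w | _]).
exact: (measurable_fun_le measurableT mf (measurable_cst v)).
Qed.

Lemma sum_const_ord {R : realType} (n : nat) (x : R) : \sum_(i < n) x = n%:R * x.
Proof. by rewrite sumr_const card_ord mulr_natl. Qed.

Theorem theorem2 :
  exists Cs Cg Ce : Rdefinitions.R, 0 < Cs /\ 0 < Cg /\ 0 < Ce /\
  forall (n k d : nat) (mu : 'I_k -> 'rV[Rdefinitions.R]_d)
    (sigma : 'I_n -> 'I_k) (tau : Rdefinitions.R)
    (dT : measure_display) (T : measurableType dT)
    (P : probability T Rdefinitions.R) (g : 'I_n -> T -> 'rV[Rdefinitions.R]_d),
  (4 <= n)%N -> (2 <= k)%N -> (k %| n)%N ->
  (forall a : 'I_k, #|[set i | sigma i == a]| = (n %/ k)%N) ->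
  0 < tau ->
  (forall i, random_vec (g i)) ->
  mutually_independent_vecs P g ->
  (forall i, (psi2_norm_vec P (g i) <= tau%:E)%E) ->
  let s := Delta mu / tau in
  Cs * k%:R <= s ^+ 2 ->
  exists A : set T, measurable A /\
    (A `<=` [set w | forall F : 'M[Rdefinitions.R]_(n, k), feasible F ->
        eta_ip mu sigma (fun i => g i w) F <= eta_ip mu sigma (fun i => g i w) (Fstar sigma) ->
        l1norm (F - Fstar sigma) / l1norm (Fstar sigma : 'M[Rdefinitions.R]_(n, k))
          <= Cg * expR (- (s ^+ 2 / Ce))]) /\
    (1 - (3 / 2) * n%:R^-1 <= fine (P A)).
Proof.
exists 1, (11264 * 2048), 2048.
split; first lra.
split; first by apply: mulr_gt0; lra.
split; first lra.
move=> n k d mu sigma tau dT T P g n4 k2 kn hcard tau0 mg Hind hpsi s hs.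
rewrite mul1r in hs.
set D0 := Delta mu.
have sE : s = D0 / tau by [].
have D0ge0 : 0 <= D0 := Delta_ge0 mu k2.
have k2R : (2 : Rdefinitions.R) <= k%:R by rewrite ler_nat.
have s2pos : 0 < s ^+ 2 by lra.
have D0pos : 0 < D0.
  rewrite lt0r D0ge0 andbT; apply/eqP => h0.
  by move: s2pos; rewrite sE h0 mul0r expr2 mulr0 ltxx.
have hD : forall a b : 'I_k, a != b -> D0 <= l2norm (mu a - mu b).
  by move=> a b ab; exact: Delta_le.
have n0 : (0 < n)%N by apply: leq_trans n4.
have nR : (0 : Rdefinitions.R) < n%:R by rewrite ltr0n.
have kR : (0 : Rdefinitions.R) < k%:R by lra.
pose c : Rdefinitions.R := 4 * tau ^+ 2.
have c0 : 0 < c by apply: mulr_gt0; [lra|exact: exprn_gt0].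
pose L : Rdefinitions.R := D0 ^+ 2 / 128.
have L0 : 0 <= L by rewrite /L; apply: divr_ge0; [exact: sqr_ge0|lra].
pose N := (4 * (n * n) * (k * k))%N.
pose Pk := ('I_k * 'I_k)%type.
pose I := ('I_n * (Pk * 'I_N))%type.
pose E := fun x : I =>
  [set w | L + (x.2.2 : nat)%:R * c <= Xf mu x.2.1.1 x.2.1.2 (g x.1 w) ^+ 2].
pose Ecap := fun x : 'I_n * Pk =>
  [set w | L + N%:R * c <= Xf mu x.2.1 x.2.2 (g x.1 w) ^+ 2].
have sigE : forall x : I, <<s rect (g x.1) >> (E x).
  by move=> x; apply: rect_event.
have mE : forall x : I, measurable (E x).
  by move=> x; apply: (sigma_meas P (mg x.1)); exact: sigE.
have mX : forall j a b, measurable_fun setT (fun w => Xf mu a b (g j w)).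
  by move=> j a b; apply: dot_meas; exact: mg.
have mcap : forall x, measurable (Ecap x).
  move=> x; rewrite /Ecap -(setTI [set w | _]).
  exact: (measurable_fun_le measurableT (measurable_cst _)
    (measurable_funM (mX x.1 x.2.1 x.2.2) (mX x.1 x.2.1 x.2.2))).
pose Cnt : T -> (Rdefinitions.R : realType) := fun w => \sum_(x : I) (\1_(E x) w : Rdefinitions.R).
pose mu0 := \sum_(x : I) fine (P (E x)).
pose eps : Rdefinitions.R := expR (- (s ^+ 2 / 1024)).
have eps0 : 0 < eps := expR_gt0 _.
have eps1 : eps <= 1.
  rewrite /eps -[X in _ <= X]exp.expR0 ler_expR; lra.
pose a0 : Rdefinitions.R := 5 * n%:R * k%:R ^+ 2 * eps.
have a0pos : 0 < a0.
  rewrite /a0; apply: mulr_gt0 => //; apply: mulr_gt0; last exact: exprn_gt0.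
  apply: mulr_gt0 => //; lra.
pose Bad2 := [set w | mu0 + a0 <= Cnt w].
pose C1 := [set w | forall x : 'I_n * Pk,
  Xf mu x.2.1 x.2.2 (g x.1 w) ^+ 2 <= L + N%:R * c].
have mCnt : measurable_fun setT Cnt.
  by apply: measurable_sum => x; exact: measurable_indic.
have mBad2 : measurable Bad2.
  rewrite /Bad2 -(setTI [set w | _]).
  exact: (measurable_fun_le measurableT (measurable_cst _) mCnt).
have mC1 : measurable C1.
  apply: meas_forall => x; apply: meas_le_cst.
  exact: (measurable_funM (mX x.1 x.2.1 x.2.2) (mX x.1 x.2.1 x.2.2)).
have mnB2 : measurable (~` Bad2) by apply: measurableC.
have mA : measurable (C1 `&` ~` Bad2) by apply: measurableI.
have mAc : measurable (~` (C1 `&` ~` Bad2)) by apply: measurableC.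
have mC1c : measurable (~` C1) by apply: measurableC.
have tailE : forall x : I,
    fine (P (E x)) <= 2 * (eps ^+ 2 * expR (- (x.2.2 : nat)%:R)).
  move=> x.
  have t1 : fine (P (E x)) <= 2 * expR (- ((L + (x.2.2 : nat)%:R * c) / c)).
    by apply: tail_model; [exact: tau0|exact: mg|exact: hpsi].
  apply: (le_trans t1); apply: ler_wpM2l; first lra.
  have eL : (L + (x.2.2 : nat)%:R * c) / c = s ^+ 2 / 512 + (x.2.2 : nat)%:R.
    rewrite /L /c sE; field; exact: lt0r_neq0.
  have ee : eps ^+ 2 * expR (- (x.2.2 : nat)%:R) =
            expR (- (s ^+ 2 / 512 + (x.2.2 : nat)%:R)).
    by rewrite /eps expr2 -!exp.expRD; congr expR; lra.
  by rewrite eL ee lexx.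

have Pmono : forall A B : set T, measurable A -> measurable B -> A `<=` B ->
    fine (P A) <= fine (P B).
  move=> A B mA' mB' AB.
  rewrite -lee_fin -(PE P mA') -(PE P mB').
  by apply: le_measure; [rewrite inE; exact: mA'|rewrite inE; exact: mB'|exact: AB].
pose h := fun q : Pk * 'I_N => expR (- ((q.2 : nat)%:R / 2)) : Rdefinitions.R.
have hpair : forall x y : I,
    fine (P (E x `&` E y)) <= 2 * (eps ^+ 2 * (h x.2 * h y.2)).
  move=> x y.
  have mxy : measurable (E x `&` E y) by apply: measurableI.
  have e2 : 0 <= eps ^+ 2 by exact: sqr_ge0.
  case: (leqP x.2.2 y.2.2) => hl.
    have le2 : fine (P (E x `&` E y)) <= fine (P (E y)).
      by apply: Pmono => // w [].
    apply: (le_trans le2); apply: (le_trans (tailE y)).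
    apply: ler_wpM2l; first lra.
    apply: ler_wpM2l => //.
    rewrite /h -exp.expRD ler_expR.
    have : ((x.2.2 : nat)%:R : Rdefinitions.R) <= (y.2.2 : nat)%:R by rewrite ler_nat.
    lra.
  have le1 : fine (P (E x `&` E y)) <= fine (P (E x)).
    by apply: Pmono => // w [].
  apply: (le_trans le1); apply: (le_trans (tailE x)).
  apply: ler_wpM2l; first lra.
  apply: ler_wpM2l => //.
  rewrite /h -exp.expRD ler_expR.
  have : ((y.2.2 : nat)%:R : Rdefinitions.R) <= (x.2.2 : nat)%:R.
    by rewrite ler_nat; exact: ltnW.
  lra.
have hs3 : \sum_(q : Pk * 'I_N) h q <= 3 * k%:R ^+ 2 := sum_h k N.
set Hs := \sum_(q : Pk * 'I_N) h q in hs3.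
have Hs0 : 0 <= Hs by apply: sumr_ge0 => q _; exact: expR_ge0.
have hmu0 : mu0 <= 6 * n%:R * k%:R ^+ 2 * eps ^+ 2.
  have h1 : mu0 <= \sum_(x : I) 2 * (eps ^+ 2 * h x.2).
    apply: ler_sum => x _; apply: (le_trans (tailE x)).
    apply: ler_wpM2l; first lra.
    apply: ler_wpM2l; first exact: sqr_ge0.
    rewrite /h ler_expR.
    have : (0 : Rdefinitions.R) <= (x.2.2 : nat)%:R by exact: ler0n.
    lra.
  have h2 : \sum_(x : I) 2 * (eps ^+ 2 * h x.2) = n%:R * (2 * (eps ^+ 2 * Hs)).
    rewrite sum_pair (eq_bigr (fun _ => 2 * (eps ^+ 2 * Hs))); last first.
      by move=> j _; rewrite /Hs !mulr_sumr.
    exact: sum_const_ord.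
  have h3 : n%:R * (2 * eps ^+ 2) * Hs <= n%:R * (2 * eps ^+ 2) * (3 * k%:R ^+ 2).
    apply: ler_wpM2l => //.
    by apply: mulr_ge0; [exact: ltW|apply: mulr_ge0; [lra|exact: sqr_ge0]].
  rewrite h2 in h1.
  lra.
have hB2 : fine (P Bad2) <= n%:R^-1.
  have hsm : a0 ^+ 2 * fine (P Bad2) <=
      \sum_(x : I) \sum_(y : I) fine (P (E x `&` E y)) - mu0 ^+ 2.
    exact: (second_moment P mE a0pos).
  have hV : \sum_(x : I) \sum_(y : I) fine (P (E x `&` E y)) - mu0 ^+ 2 <=
      \sum_(j : 'I_n) \sum_(q : Pk * 'I_N) \sum_(q' : Pk * 'I_N)
         fine (P (E (j, q) `&` E (j, q'))).
    have p0 : forall x : 'I_n * (Pk * 'I_N), 0 <= fine (P (E x)).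
      by move=> x; exact: Pfine_ge0.
    have hind : forall x y : 'I_n * (Pk * 'I_N), x.1 != y.1 ->
        fine (P (E x `&` E y)) = fine (P (E x)) * fine (P (E y)).
      move=> x y hxy.
      have hi := indep_sigma mg Hind hxy (sigE x) (sigE y).
      rewrite hi fineM //; apply: fin_num_measure; exact: mE.
    exact: (var_split p0 hind).
  have hS : \sum_(j : 'I_n) \sum_(q : Pk * 'I_N) \sum_(q' : Pk * 'I_N)
         fine (P (E (j, q) `&` E (j, q'))) <= n%:R * (2 * Hs ^+ 2 * eps ^+ 2).
    have e3 : forall j : 'I_n, \sum_(q : Pk * 'I_N) \sum_(q' : Pk * 'I_N)
        fine (P (E (j, q) `&` E (j, q'))) <= 2 * Hs ^+ 2 * eps ^+ 2.
      move=> j.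
      have := double_sum h (2 * eps ^+ 2).
      move=> ds.
      have : \sum_(q : Pk * 'I_N) \sum_(q' : Pk * 'I_N)
          fine (P (E (j, q) `&` E (j, q'))) <=
          \sum_(q : Pk * 'I_N) \sum_(q' : Pk * 'I_N) 2 * eps ^+ 2 * (h q * h q').
        apply: ler_sum => q _; apply: ler_sum => q' _.
        by rewrite -mulrA; exact: (hpair (j, q) (j, q')).
      rewrite ds /Hs; lra.
    apply: (le_trans (ler_sum _ (fun j _ => e3 j))).
    by rewrite sum_const_ord.
  have ea : a0 ^+ 2 = 25 * n%:R ^+ 2 * k%:R ^+ 4 * eps ^+ 2 by rewrite /a0; ring.
  have hH : Hs ^+ 2 <= 9 * k%:R ^+ 4.
    have h33 : Hs * Hs <= (3 * k%:R ^+ 2) * (3 * k%:R ^+ 2) by apply: ler_pM.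
    have -> : 9 * k%:R ^+ 4 = ((3 : Rdefinitions.R) * k%:R ^+ 2) * (3 * k%:R ^+ 2) by ring.
    by rewrite expr2.
  set f := fine (P Bad2) in hsm *.
  have f0 : 0 <= f by exact: Pfine_ge0.
  have Kp0 : 0 < n%:R * k%:R ^+ 4 * eps ^+ 2.
    by apply: mulr_gt0; [apply: mulr_gt0 => //; exact: exprn_gt0|exact: exprn_gt0].
  have hnH : n%:R * (2 * Hs ^+ 2 * eps ^+ 2) <= n%:R * (2 * (9 * k%:R ^+ 4) * eps ^+ 2).
    apply: ler_wpM2l; first exact: ltW.
    apply: ler_wpM2r; first exact: sqr_ge0.
    apply: ler_wpM2l => //; lra.
  rewrite ea in hsm.
  have h25 : (25 * n%:R * f) * (n%:R * k%:R ^+ 4 * eps ^+ 2) <=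
             18 * (n%:R * k%:R ^+ 4 * eps ^+ 2).
    have e5 : (25 * n%:R * f) * (n%:R * k%:R ^+ 4 * eps ^+ 2) =
              25 * n%:R ^+ 2 * k%:R ^+ 4 * eps ^+ 2 * f by ring.
    have e6 : 18 * (n%:R * k%:R ^+ 4 * eps ^+ 2) =
              n%:R * (2 * (9 * k%:R ^+ 4) * eps ^+ 2) by ring.
    rewrite e5 e6; lra.
  rewrite ler_pM2r // in h25.
  rewrite -[n%:R^-1]mul1r ler_pdivlMr //.
  lra.
have hB1 : fine (P (~` C1)) <= (2 * n%:R)^-1.
  have hex : forall w, (~` C1) w -> exists x, Ecap x w.
    move=> w /existsNP [x hx]; exists x; rewrite /Ecap /=.
    by apply: ltW; rewrite ltNge; apply/negP.
  have hub := union_bound P mC1c mcap hex.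
  have tcap : forall x, fine (P (Ecap x)) <= 2 * expR (- (N%:R : Rdefinitions.R)).
    move=> x.
    have t1 : fine (P (Ecap x)) <= 2 * expR (- ((L + N%:R * c) / c)).
      by apply: tail_model; [exact: tau0|exact: mg|exact: hpsi].
    apply: (le_trans t1); apply: ler_wpM2l; first lra.
    rewrite ler_expR lerN2.
    have -> : (L + N%:R * c) / c = L / c + N%:R.
      by field; exact: lt0r_neq0.
    rewrite lerDr; apply: divr_ge0 => //; exact: ltW.
  have hs1 : \sum_(x : 'I_n * Pk) fine (P (Ecap x)) <=
             \sum_(x : 'I_n * Pk) 2 * expR (- (N%:R : Rdefinitions.R)).
    by apply: ler_sum => x _; exact: tcap.
  have e7 : \sum_(x : 'I_n * Pk) 2 * expR (- (N%:R : Rdefinitions.R)) =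
            n%:R * (k%:R ^+ 2 * (2 * expR (- (N%:R : Rdefinitions.R)))).
    rewrite sum_pair (eq_bigr (fun _ => k%:R ^+ 2 * (2 * expR (- (N%:R : Rdefinitions.R))))).
      exact: sum_const_ord.
    move=> j _; rewrite sum_pair.
    rewrite (eq_bigr (fun _ => k%:R * (2 * expR (- (N%:R : Rdefinitions.R))))); last first.
      by move=> a _; exact: sum_const_ord.
    rewrite sum_const_ord; ring.
  rewrite e7 in hs1.
  have eN : (N%:R : Rdefinitions.R) = 4 * (n%:R * n%:R) * (k%:R * k%:R).
    by rewrite /N !natrM.
  have hN : 1 + N%:R <= expR (N%:R : Rdefinitions.R) := expR_ge1Dx _.
  have eexp : expR (- (N%:R : Rdefinitions.R)) * expR N%:R = 1.
    by rewrite -exp.expRD addNr exp.expR0.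
  set z := expR (- (N%:R : Rdefinitions.R)) in hs1 eexp *.
  set Ex := expR (N%:R : Rdefinitions.R) in hN eexp.
  have z0 : 0 < z := expR_gt0 _.
  have hz : 0 <= z * (Ex - 1 - 4 * (n%:R * n%:R) * (k%:R * k%:R)).
    by apply: mulr_ge0; [exact: ltW|lra].
  apply: (le_trans hub); apply: (le_trans hs1).
  rewrite -[(2 * n%:R)^-1]mul1r ler_pdivlMr; last lra.
  nra.
exists (C1 `&` ~` Bad2).
split; first exact: mA.
split.
  move=> w [c1 nb2] F hF heta.
  pose G := fun i => g i w.
  have hcap : forall j (p : 'I_k * 'I_k), Xf mu p.1 p.2 (G j) ^+ 2 <= L + N%:R * c.
    by move=> j p; exact: (c1 (j, p)).
  have heta' : eta_ip mu sigma G F <= eta_ip mu sigma G (Fstar sigma) := heta.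
  have hdm := det_main n0 hF D0pos c0 (erefl L) hD hcap heta'.
  have cntE : \sum_j \sum_(p : 'I_k * 'I_k) \sum_(l < N)
       bR (L + l%:R * c <= Xf mu p.1 p.2 (G j) ^+ 2) = Cnt w.
    rewrite /Cnt [RHS]sum_pair; apply: eq_bigr => j _.
    rewrite [RHS]sum_pair; apply: eq_bigr => p _; apply: eq_bigr => l _.
    rewrite indicE.
    have [hl|hl] := boolP (L + l%:R * c <= Xf mu p.1 p.2 (G j) ^+ 2).
      by rewrite /bR (mem_set (hl : E (j, (p, l)) w)).
    by rewrite /bR (memNset (negP hl : ~ E (j, (p, l)) w)).
  rewrite cntE in hdm.
  apply: (le_trans hdm).
  have hC : Cnt w < mu0 + a0 by rewrite ltNge; apply/negP.
  have hsum : mu0 + a0 <= 11 * n%:R * k%:R ^+ 2 * eps.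
    have X0 : (0 : Rdefinitions.R) <= n%:R * k%:R ^+ 2 by apply: mulr_ge0; [exact: ltW|exact: sqr_ge0].
    have hee : (n%:R * k%:R ^+ 2) * eps ^+ 2 <= (n%:R * k%:R ^+ 2) * eps.
      apply: ler_wpM2l => //; rewrite expr2; nra.
    rewrite /a0; lra.
  pose K1 := 256 * c / (n%:R * D0 ^+ 2).
  have K10 : 0 <= K1.
    rewrite /K1; apply: divr_ge0; first by apply: mulr_ge0; [lra|exact: ltW].
    by apply: mulr_ge0; [exact: ltW|exact: sqr_ge0].
  have h1 : K1 * Cnt w <= K1 * (11 * n%:R * k%:R ^+ 2 * eps).
    by apply: ler_wpM2l => //; apply: ltW; exact: (lt_le_trans hC hsum).
  apply: (le_trans h1).
  have eK : K1 * (11 * n%:R * k%:R ^+ 2 * eps) =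
            11264 * (k%:R ^+ 2 / s ^+ 2 * eps).
    rewrite /K1 /c sE; field.
    by rewrite !lt0r_neq0.
  rewrite eK.
  have fc := final_const s2pos (ltW kR) hs.
  rewrite -[X in _ <= X]mulrA; apply: ler_wpM2l; first lra.
  exact: fc.
have hcompl : ~` (C1 `&` ~` Bad2) `<=` ~` C1 `|` Bad2.
  move=> w hA; have [c1|nc1] := pselect (C1 w); last by left.
  right; have [b|nb] := pselect (Bad2 w) => //.
  by exfalso; apply: hA; split.
have hU := union2_bound P mAc mC1c mBad2 hcompl.
have e := probability_setC P mA.
rewrite (PE P mAc) (PE P mA) -EFinB in e.
case: e => e.
have e2 : (2 * n%:R)^-1 = n%:R^-1 / 2 :> Rdefinitions.R by rewrite invfM mulrC.
lra.
Qed.
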